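(* Let $X$ be a non-trivial vector space over a field $\mathbb{k}$ and let $T:X\to X$ be a linear map with no non-trivial finite dimensional invariant subspaces. Then for any finite dimensional subspace $L$ of $X$, there is $m=m(L)\in\mathbb{N}$ such that $p(T)(L)\cap L=\{0\}$ for every polynomial $p\in\mathbb{k}[t]$ with $\deg p\geq m$.
   Context: A non-trivial space/subspace means one different from $\{0\}$; a subspace $L$ is invariant for $T$ if $T(L)\subseteq L$. *)

(* Defs.v *)
From HB Require Import structures.
From mathcomp Require Import all_boot all_order all_algebra.
Set Implicit Arguments. Unset Strict Implicit. Unset Printing Implicit Defensive.
Import GRing.Theory.
Local Open Scope ring_scope.

Section Defs.
Variables (K : fieldType) (X : lmodType K).

Definition is_subspace (L : X -> Prop) : Prop :=
  L 0 /\ (forall (a : K) (x y : X), L x -> L y -> L (a *: x + y)).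

Definition span_seq (s : seq X) (x : X) : Prop :=
  exists c : 'I_(size s) -> K, x = \sum_(i < size s) c i *: s`_(nat_of_ord i).

Definition finite_dim (L : X -> Prop) : Prop :=
  exists s : seq X, forall x, L x <-> span_seq s x.

Definition nontrivial (L : X -> Prop) : Prop := exists x, L x /\ x <> 0.

Definition T_invariant (T : X -> X) (L : X -> Prop) : Prop :=
  forall x, L x -> L (T x).

Definition poly_app (p : {poly K}) (T : X -> X) (x : X) : X :=
  \sum_(i < size p) p`_i *: iter i T x.
End Defs.

(* Main.v *)
Require Import Defs.
From HB Require Import structures.
From mathcomp Require Import all_boot all_order all_algebra.
Import GRing.Theory.
Local Open Scope ring_scope.
From Stdlib Require Import Classical ClassicalEpsilon.
Set Implicit Arguments. Unset Strict Implicit. Unset Printing Implicit Defensive.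

Section Lin.
Variables (K : fieldType) (X : lmodType K).
Implicit Types (s u v b e : seq X) (x y z : X).

Definition comb s (c : nat -> K) : X := \sum_(i < size s) c i *: s`_i.
Definition inspan s x := exists c, x = comb s c.
Definition free s := forall c, comb s c = 0 -> forall i, (i < size s)%N -> c i = 0.

Definition ordfun n (f : 'I_n -> K) : nat -> K :=
  fun k => if insub k is Some i then f i else 0.
Lemma ordfunE n (f : 'I_n -> K) (i : 'I_n) : ordfun f i = f i.
Proof. by rewrite /ordfun valK. Qed.

Lemma comb_nil c : comb [::] c = 0.
Proof. by rewrite /comb big_ord0. Qed.

Lemma comb_cons a s c : comb (a :: s) c = c 0%N *: a + comb s (fun i => c i.+1).
Proof. by rewrite /comb /= big_ord_recl. Qed.

Lemma comb_ext s c1 c2 : (forall i, (i < size s)%N -> c1 i = c2 i) -> comb s c1 = comb s c2.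
Proof. by move=> H; apply: eq_bigr => i _; rewrite H. Qed.

Lemma comb_lin s a c1 c2 : a *: comb s c1 + comb s c2 = comb s (fun i => a * c1 i + c2 i).
Proof.
rewrite /comb scaler_sumr -big_split; apply: eq_bigr => i _.
by rewrite scalerDl scalerA.
Qed.

Lemma comb0 s : comb s (fun _ => 0) = 0.
Proof. by rewrite /comb big1 // => i _; rewrite scale0r. Qed.

Lemma comb_cat u v c : comb (u ++ v) c = comb u c + comb v (fun i => c (size u + i)%N).
Proof.
rewrite /comb size_cat big_split_ord; congr (_ + _); apply: eq_bigr => i _.
  by rewrite /= nth_cat ltn_ord.
by rewrite /= nth_cat ltnNge leq_addr /= addKn.
Qed.

Lemma comb_rcons s a c : comb (rcons s a) c = comb s c + c (size s) *: a.
Proof. by rewrite -cats1 comb_cat comb_cons comb_nil addr0 addn0. Qed.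

Lemma comb_map (T : {linear X -> X}) s c : comb (map T s) c = T (comb s c).
Proof.
rewrite /comb linear_sum size_map; apply: eq_bigr => i _.
by rewrite linearZ (nth_map 0) ?linear0 // ltn_ord.
Qed.

Lemma inspan0 s : inspan s 0.
Proof. by exists (fun _ => 0); rewrite comb0. Qed.

Lemma inspan_lin s a x y : inspan s x -> inspan s y -> inspan s (a *: x + y).
Proof. by move=> [c1 ->] [c2 ->]; rewrite comb_lin; eexists. Qed.

Lemma inspan_sub s : is_subspace (inspan s).
Proof. split; [exact: inspan0 | move=> a x y; exact: inspan_lin]. Qed.

Lemma sub_scale (P : X -> Prop) a x : is_subspace P -> P x -> P (a *: x).
Proof. by move=> [P0 PL] Px; rewrite -[_ *: _]addr0; apply: PL. Qed.

Lemma sub_add (P : X -> Prop) x y : is_subspace P -> P x -> P y -> P (x + y).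
Proof. by move=> [P0 PL] Px Py; rewrite -[x]scale1r; apply: PL. Qed.

Lemma sub_sum (P : X -> Prop) n (F : 'I_n -> X) : is_subspace P ->
  (forall i, P (F i)) -> P (\sum_(i < n) F i).
Proof.
move=> sP HF; apply: (big_ind P) => //; first by case: sP.
by move=> x y; apply: sub_add.
Qed.

Lemma span_sub (P : X -> Prop) u x : is_subspace P ->
  (forall i, (i < size u)%N -> P u`_i) -> inspan u x -> P x.
Proof.
move=> sP Hu [c ->]; rewrite /comb; apply: sub_sum => // i.
by apply: sub_scale => //; apply: Hu.
Qed.

Lemma inspan_nth s i : (i < size s)%N -> inspan s s`_i.
Proof.
move=> Hi; exists (fun j => if j == i then 1 else 0).
rewrite /comb (bigD1 (Ordinal Hi)) //= eqxx scale1r big1 ?addr0 // => j Hj.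
case: eqP => [E|]; last by rewrite scale0r.
by case/negP: Hj; apply/eqP/val_inj.
Qed.

Lemma inspan_incl u v x : (forall i, (i < size u)%N -> inspan v u`_i) -> inspan u x -> inspan v x.
Proof. by move=> H; apply: span_sub => //; exact: inspan_sub. Qed.

Lemma inspan_nil x : inspan [::] x -> x = 0.
Proof. by move=> [c ->]; rewrite comb_nil. Qed.

Lemma inspan_cat u v x : inspan (u ++ v) x <->
  exists x1 x2, inspan u x1 /\ inspan v x2 /\ x = x1 + x2.
Proof.
split.
  move=> [c ->]; rewrite comb_cat; do 2 eexists; split; [eexists; reflexivity|].
  split; [eexists; reflexivity| reflexivity].
move=> [x1 [x2 [H1 [H2 ->]]]]; apply: sub_add; first exact: inspan_sub.
  apply: inspan_incl H1 => i Hi.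
  have -> : u`_i = (u ++ v)`_i by rewrite nth_cat Hi.
  by apply: inspan_nth; rewrite size_cat ltn_addr.
apply: inspan_incl H2 => i Hi.
have -> : v`_i = (u ++ v)`_(size u + i) by rewrite nth_cat ltnNge leq_addr /= addKn.
by apply: inspan_nth; rewrite size_cat ltn_add2l.
Qed.

Lemma inspan_map (T : {linear X -> X}) u x : inspan (map T u) x <-> exists y, inspan u y /\ x = T y.
Proof.
split; first by move=> [c ->]; rewrite comb_map; exists (comb u c); split => //; eexists.
by move=> [y [[c ->] ->]]; rewrite -comb_map; eexists.
Qed.

Lemma inspan_span_seq u x : inspan u x <-> span_seq u x.
Proof.
split.
  by move=> [c ->]; exists (fun i => c i).
by move=> [c ->]; exists (ordfun c); apply: eq_bigr => i _; rewrite ordfunE.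
Qed.

Lemma free_nil : free [::].
Proof. by []. Qed.

Lemma free_rcons b x : free b -> ~ inspan b x -> free (rcons b x).
Proof.
move=> fb nx c; rewrite comb_rcons => H.
have c0 : c (size b) = 0.
  apply: NNPP => cn; have {}cn : c (size b) != 0 by apply/eqP.
  apply: nx.
  exists (fun i => - c i / c (size b)).
  have -> : x = - (c (size b))^-1 *: comb b c.
    apply: (scalerI cn); rewrite scalerA mulrN mulfV // scaleN1r.
    by apply/eqP; rewrite -addr_eq0 addrC H.
  by rewrite /comb scaler_sumr; apply: eq_bigr => i _; rewrite scalerA; congr (_ *: _); rewrite mulrC mulrN mulNr.
rewrite c0 scale0r addr0 in H.
move=> i; rewrite size_rcons ltnS leq_eqVlt => /orP[/eqP ->//|]; exact: fb.
Qed.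

Lemma notfree_rcons b x : free b -> ~ free (rcons b x) -> inspan b x.
Proof. by move=> fb nf; apply: NNPP => nx; apply: nf; apply: free_rcons. Qed.

Lemma free_cons b x : free b -> ~ inspan b x -> free (x :: b).
Proof.
move=> fb nx c; rewrite comb_cons => H.
have c0 : c 0%N = 0.
  apply: NNPP => cn; have {}cn : c 0%N != 0 by apply/eqP.
  apply: nx.
  exists (fun i => - c i.+1 / c 0%N).
  have -> : x = - (c 0%N)^-1 *: comb b (fun i => c i.+1).
    apply: (scalerI cn); rewrite scalerA mulrN mulfV // scaleN1r.
    by apply/eqP; rewrite -addr_eq0 H.
  by rewrite /comb scaler_sumr; apply: eq_bigr => i _; rewrite scalerA; congr (_ *: _); rewrite mulrC mulrN mulNr.
rewrite c0 scale0r add0r in H.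
by case=> [|i] //= Hi; apply: (fb _ H).
Qed.

Lemma free_cat_elim u v c1 c2 : free (u ++ v) -> comb u c1 + comb v c2 = 0 ->
  (forall i, (i < size u)%N -> c1 i = 0) /\ (forall i, (i < size v)%N -> c2 i = 0).
Proof.
move=> f H.
pose c i := if (i < size u)%N then c1 i else c2 (i - size u)%N.
have Hc : comb (u ++ v) c = 0.
  rewrite comb_cat -H; congr (_ + _); apply: comb_ext => i Hi; rewrite /c.
    by rewrite Hi.
  by rewrite ltnNge leq_addr /= addKn.
split=> i Hi.
  by have := f c Hc i; rewrite /c Hi size_cat ltn_addr //; apply.
have := f c Hc (size u + i)%N; rewrite size_cat ltn_add2l => /(_ Hi).
by rewrite /c ltnNge leq_addr /= addKn; apply.
Qed.

Lemma free_cat_intro u v :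
  (forall c1 c2, comb u c1 + comb v c2 = 0 ->
    (forall i, (i < size u)%N -> c1 i = 0) /\ (forall i, (i < size v)%N -> c2 i = 0)) ->
  free (u ++ v).
Proof.
move=> H c; rewrite comb_cat => /H [H1 H2] i; rewrite size_cat => Hi.
case: (ltnP i (size u)) => Hiu; first exact: H1.
by have := H2 (i - size u)%N; rewrite subnKC //; apply; rewrite ltn_subLR.
Qed.

Lemma steinitz u v : free u -> (forall i, (i < size u)%N -> inspan v u`_i) ->
  (size u <= size v)%N.
Proof.
move=> fu uv; rewrite leqNgt; apply/negP => lt.
have [C HC] : exists C : 'I_(size u) -> nat -> K, forall i : 'I_(size u), u`_i = comb v (C i).
  have H : forall i : 'I_(size u), exists c : nat -> K, u`_i = comb v c by move=> i; apply: uv.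
  exact: (fin_all_exists H).
pose A : 'M[K]_(size u, size v) := \matrix_(i, j) C i j.
have nf : kermx A != 0.
  rewrite kermx_eq0 /row_free; apply/negP => /eqP E.
  by have := rank_leq_col A; rewrite E leqNgt lt.
have [i ri] : exists i, row i (kermx A) != 0.
  apply: NNPP => N; move/negP: nf; apply; apply/eqP/row_matrixP => i.
  rewrite row0; apply/eqP; apply: NNPP => Ni; apply: N; exists i; exact/negP.
set r := row i (kermx A) in ri.
have rA : r *m A = 0 by rewrite /r -row_mul mulmx_ker row0.
have Hc : comb u (ordfun (fun k => r 0 k)) = 0.
  rewrite /comb.
  under eq_bigr => k _ do rewrite ordfunE HC /comb scaler_sumr.
  rewrite exchange_big /=; apply: big1 => j _.
  under eq_bigr => k _ do rewrite scalerA.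
  rewrite -scaler_suml.
  have : (r *m A) 0 j = 0 by rewrite rA mxE.
  rewrite mxE => E.
  rewrite (eq_bigr (fun k => r 0 k * A k j)) ?E ?scale0r // => k _.
  by rewrite /A mxE.
move/negP: ri; apply; apply/eqP/rowP => k.
by have := fu _ Hc k (ltn_ord k); rewrite ordfunE => ->; rewrite mxE.
Qed.

End Lin.

Section Lin2.
Variables (K : fieldType) (X : lmodType K).
Implicit Types (s u v b e : seq X) (x y z : X).

Definition basis (P : X -> Prop) b := free b /\ forall x, P x <-> inspan b x.

Lemma BE (P : X -> Prop) v : is_subspace P -> (forall x, P x -> inspan v x) ->
  forall b, free b -> (forall i, (i < size b)%N -> P b`_i) ->
  exists e, basis P (e ++ b).
Proof.
move=> sP Pv.
have step : forall b, free b -> (forall i, (i < size b)%N -> P b`_i) ->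
   (forall x, P x -> inspan b x) \/
   (exists x, free (x :: b) /\ (size b < size v)%N /\
       forall i, (i < size (x :: b))%N -> P (x :: b)`_i).
  move=> b fb Pb; case: (classic (exists x, P x /\ ~ inspan b x)) => [[x [Px nx]]|N].
    right; exists x.
    have fxb : free (x :: b) by apply: free_cons.
    have Pxb : forall i, (i < size (x :: b))%N -> P (x :: b)`_i by case=> [|i] //= /Pb.
    split => //; split => //.
    by apply: (steinitz fxb) => i Hi; apply: Pv; apply: Pxb.
  left => x Px; apply: NNPP => nx; apply: N; by exists x.
suff H : forall k b, (size v - size b <= k)%N -> free b ->
   (forall i, (i < size b)%N -> P b`_i) -> exists e, basis P (e ++ b).
  by move=> b; apply: (H _ b (leqnn _)).
elim=> [|k IH] b Hk fb Pb; (case: (step b fb Pb) => [Hall|[x [fxb [lt Pxb]]]];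
  [exists [::]; split => // x; split; [exact: Hall| exact: span_sub] |]).
  by move: Hk; rewrite leqn0 subn_eq0 leqNgt lt.
have [e He] : exists e, basis P (e ++ x :: b).
  apply: (IH _ _ fxb Pxb); rewrite /= subnS; move: Hk; rewrite -subn_gt0 in lt.
  by case: (size v - size b)%N lt.
by exists (rcons e x); rewrite cat_rcons.
Qed.

Lemma basis_size P b1 b2 : basis P b1 -> basis P b2 -> size b1 = size b2.
Proof.
move=> [f1 H1] [f2 H2]; apply/eqP; rewrite eqn_leq; apply/andP; split.
  apply: (steinitz f1) => i Hi; apply/H2/H1; exact: inspan_nth.
apply: (steinitz f2) => i Hi; apply/H1/H2; exact: inspan_nth.
Qed.

Lemma chain (f : nat -> X) N : free (mkseq f 1) -> ~ free (mkseq f N.+1) ->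
  exists k, (0 < k)%N /\ free (mkseq f k) /\ inspan (mkseq f k) (f k).
Proof.
move=> f1; elim: N => [|N IH] nf; first by [].
case: (classic (free (mkseq f N.+1))) => [fN|nfN]; last exact: IH.
exists N.+1; split => //; split => //.
by apply: notfree_rcons => //; rewrite -mkseqS.
Qed.

End Lin2.

Lemma ev_const (f : nat -> nat) : (forall j, (f j.+1 <= f j)%N) ->
  exists J, forall j, (J <= j)%N -> f j = f J.
Proof.
have mono : forall g : nat -> nat, (forall j, (g j.+1 <= g j)%N) -> forall j, (g j <= g 0)%N.
  by move=> g Hg; elim=> // j IH; exact: leq_trans (Hg j) IH.
suff H : forall n (g : nat -> nat), (forall j, (g j.+1 <= g j)%N) -> (g 0 <= n)%N ->
  exists J, forall j, (J <= j)%N -> g j = g J by move=> Hf; exact: (H _ f Hf (leqnn _)).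
elim=> [|n IH] g Hg Hn;
  (case: (classic (forall j, g j = g 0)) => [Hall|Nall];
  [by exists 0%N => j _; rewrite Hall|]);
  (have [j0 Hj0] : exists j0, g j0 <> g 0 by apply: NNPP => N; apply: Nall => j;
      apply: NNPP => E; apply: N; exists j; exact: E);
  (have lt : (g j0 < g 0)%N by have := mono g Hg j0; rewrite leq_eqVlt => /orP[/eqP//|]).
  by move: (leq_trans lt Hn).
have Hg' : forall j, (g (j0 + j.+1) <= g (j0 + j))%N by move=> j; rewrite addnS; apply: Hg.
have Hn' : (g (j0 + 0) <= n)%N by rewrite addn0 -ltnS; exact: leq_trans lt Hn.
have [J HJ] := IH (fun j => g (j0 + j)%N) Hg' Hn'.
exists (j0 + J)%N => j Hj.
have Hj0j : (j0 <= j)%N by exact: leq_trans (leq_addr J j0) Hj.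
have := HJ (j - j0)%N; rewrite subnKC //; apply; by rewrite leq_subRL.
Qed.

Section TS.
Variables (K : fieldType) (X : lmodType K) (T : {linear X -> X}) (s : seq X).
Implicit Types (u v b e : seq X) (x y z : X).

Fixpoint w j : seq X := if j is j'.+1 then s ++ map T (w j') else s.
Definition W j x := inspan (w j) x.

Lemma W_sub j : is_subspace (W j).
Proof. exact: inspan_sub. Qed.

Lemma W_succ j z : W j.+1 z <-> exists x y, inspan s x /\ W j y /\ z = x + T y.
Proof.
rewrite /W /=; split.
  move/inspan_cat => [x1 [x2 [H1 [/inspan_map [y [Hy ->]] ->]]]].
  by exists x1, y.
move=> [x [y [Hx [Hy ->]]]]; apply/inspan_cat; exists x, (T y); split => //; split => //.
by apply/inspan_map; exists y.
Qed.

Lemma W_s j x : inspan s x -> W j x.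
Proof.
case: j => [//|j] Hx; apply/W_succ; exists x, 0; split => //; split.
  exact: inspan0.
by rewrite linear0 addr0.
Qed.

Lemma W_T j x : W j x -> W j.+1 (T x).
Proof. move=> Hx; apply/W_succ; exists 0, x; split; [exact: inspan0| by rewrite add0r]. Qed.

Lemma W_le_succ j x : W j x -> W j.+1 x.
Proof.
elim: j x => [|j IH] x Hx; first exact: W_s.
move/W_succ: Hx => [x1 [y [H1 [Hy ->]]]]; apply/W_succ; exists x1, y; split => //; split => //.
exact: IH.
Qed.

Lemma W_mono j k x : (j <= k)%N -> W j x -> W k x.
Proof.
move=> /subnK <-; elim: (k - j)%N => [//|l IH] Hx; rewrite addSn; apply: W_le_succ; exact: IH.
Qed.

Lemma W_iter i x : inspan s x -> W i (iter i T x).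
Proof. by move=> Hx; elim: i => [|i IH] /=; [exact: W_s | exact: W_T]. Qed.

Lemma comb_opp u (c : nat -> K) : comb u (fun i => - c i) = - comb u c.
Proof. by rewrite /comb -sumrN; apply: eq_bigr => i _; rewrite scaleNr. Qed.

Lemma W_bound j x : W j x -> inspan (w j) x.
Proof. by []. Qed.

Lemma key j b0 b1 b2 : basis (W j) b0 -> basis (W j.+1) b1 -> basis (W j.+2) b2 ->
  (size b2 - size b1 <= size b1 - size b0)%N /\
  ((size b2 - size b1 = size b1 - size b0)%N ->
     forall z, W j.+1 z -> W j.+1 (T z) -> W j z).
Proof.
move=> B0 B1 B2.
pose P z := W j.+1 z /\ W j.+1 (T z).
have sP : is_subspace P.
  split; first by split; rewrite ?linear0; exact: inspan0.
  move=> a x y [Hx HTx] [Hy HTy]; split; first exact: (W_sub j.+1).2.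
  by rewrite linearD linearZ; apply: (W_sub j.+1).2.
have PW : forall z, P z -> inspan (w j.+1) z by move=> z [].
have WP : forall z, W j z -> P z by move=> z Hz; split; [exact: W_le_succ| exact: W_T].
have [fb0 Hb0] := B0.
have [e1 [fe1 He1]] : exists e1, basis P (e1 ++ b0).
  apply: (BE sP PW fb0) => i Hi; apply: WP; apply/Hb0; exact: inspan_nth.
have sW1 := W_sub j.+1.
have [e2 [fe2 He2]] : exists e2, basis (W j.+1) (e2 ++ (e1 ++ b0)).
  apply: (BE sW1 (@W_bound j.+1) fe1) => i Hi.
  by have [] : P (e1 ++ b0)`_i by apply/He1; exact: inspan_nth.
have E1 : size b1 = (size e2 + (size e1 + size b0))%N.
  by rewrite (basis_size B1 (conj fe2 He2)) !size_cat.
have [fb1 Hb1] := B1.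
have B2' : basis (W j.+2) (map T e2 ++ b1).
  split.
    apply: free_cat_intro => c1 c2.
    rewrite comb_map => H.
    have HP : P (comb e2 c1).
      split.
        apply/He2/inspan_cat; exists (comb e2 c1), 0; split; first by eexists.
        by split; [exact: inspan0 | rewrite addr0].
      have -> : T (comb e2 c1) = - comb b1 c2 by apply/eqP; rewrite -addr_eq0 H.
      by apply/Hb1; rewrite -scaleN1r -[_ *: _]addr0; apply: inspan_lin; [eexists|exact: inspan0].
    move/He1: HP => [c3 Hc3].
    have E : comb e2 c1 + comb (e1 ++ b0) (fun i => - c3 i) = 0.
      by rewrite comb_opp -Hc3 subrr.
    have [Z1 _] := free_cat_elim fe2 E.
    have Z : comb e2 c1 = 0 by rewrite (comb_ext (c2 := fun _ => 0)) ?comb0.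
    rewrite Z linear0 add0r in H.
    split; [by move=> i; rewrite size_map; apply: Z1 | exact: fb1 H].
  move=> x; split.
    move/W_succ => [x0 [y [Hx0 [Hy ->]]]].
    move/He2/inspan_cat: Hy => [y1 [y2 [[c ->] [Hy2 ->]]]].
    have [_ HTy2] : P y2 by apply/He1.
    apply/inspan_cat; exists (T (comb e2 c)), (x0 + T y2); split.
      by apply/inspan_map; exists (comb e2 c); split => //; eexists.
    split; first by apply/Hb1; apply: sub_add; [exact: W_sub | exact: W_s | exact: HTy2].
    by rewrite linearD addrCA.
  move/inspan_cat => [z1 [z2 [/inspan_map [y [Hy ->]] [Hz2 ->]]]].
  apply: sub_add; first exact: W_sub.
    apply: W_T; apply/He2/inspan_cat; exists y, 0; split => //; split; [exact: inspan0|by rewrite addr0].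
  by apply: W_le_succ; apply/Hb1.
have E2 : size b2 = (size e2 + size b1)%N by rewrite (basis_size B2 B2') size_cat size_map.
rewrite E2 addnK E1 addnA addnK; split; first exact: leq_addr.
move=> /eqP; rewrite -{1}[size e2]addn0 eqn_add2l eq_sym size_eq0 => /eqP e10.
move=> z Hz HTz; apply/Hb0; have : P z by [].
by move/He1; rewrite e10.
Qed.

End TS.

Section TS2.
Variables (K : fieldType) (X : lmodType K) (T : {linear X -> X}) (s : seq X).
Implicit Types (u v b e : seq X) (x y z : X).
Local Notation W := (W T s).

Lemma exists_J : exists J, forall j, (J <= j)%N ->
  forall z, W j.+1 z -> W j.+1 (T z) -> W j z.
Proof.
have exb : forall j, exists b, basis (W j) b.
  move=> j; have f0 : free ([::] : seq X) by [].
  have [e He] := BE (W_sub T s j) (@W_bound _ _ T s j) f0 (fun i (Hi : (i < 0)%N) => False_ind _ (notF Hi)).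
  by exists e; rewrite cats0 in He.
pose B j := proj1_sig (constructive_indefinite_description _ (exb j)).
have HB : forall j, basis (W j) (B j) by move=> j; exact: proj2_sig (constructive_indefinite_description _ (exb j)).
pose g j := (size (B j.+1) - size (B j))%N.
have [J HJ] := @ev_const g (fun j => (key (HB j) (HB j.+1) (HB j.+2)).1).
exists J => j Hj; apply: (key (HB j) (HB j.+1) (HB j.+2)).2.
have := HJ j.+1 (leqW Hj); have := HJ j Hj; rewrite /g => -> ->.
by [].
Qed.

Lemma iter_lin i n (a : 'I_n -> K) (F : 'I_n -> X) :
  iter i T (\sum_(l < n) a l *: F l) = \sum_(l < n) a l *: iter i T (F l).
Proof.
elim: i => [//|i IH] /=; rewrite IH linear_sum; apply: eq_bigr => l _; by rewrite linearZ.
Qed.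

Lemma poly_iter (p : {poly K}) i x : iter i T (poly_app p (fun t : X => T t) x) = poly_app p (fun t : X => T t) (iter i T x).
Proof.
rewrite /poly_app iter_lin; apply: eq_bigr => l _; congr (_ *: _).
by rewrite -!iterD addnC.
Qed.

Variable J : nat.
Hypothesis jump : forall j, (J <= j)%N -> forall z, W j.+1 z -> W j.+1 (T z) -> W j z.

Lemma iter_jump j z : (J <= j)%N -> W j.+1 z -> ~ W j z ->
  forall l, W (j.+1 + l) (iter l T z) /\ ~ W (j + l) (iter l T z).
Proof.
move=> Hj Hz nz; elim=> [|l [IH1 IH2]]; first by rewrite !addn0.
split; first by rewrite addnS; exact: W_T.
rewrite /= addnS => H; apply: IH2; apply: (jump (j := (j + l)%N)).
- exact: leq_trans Hj (leq_addr _ _).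
- by rewrite -addSn.
- exact: H.
Qed.

Lemma poly_jump (p : {poly K}) j z : (J <= j)%N -> W j.+1 z -> ~ W j z -> p != 0 ->
  ~ W (j + (size p).-1) (poly_app p (fun t : X => T t) z).
Proof.
move=> Hj Hz nz p0.
set k := (size p).-1.
have sz : size p = k.+1 by rewrite prednK // size_poly_gt0.
rewrite /poly_app sz big_ord_recr /= => H.
have sW := W_sub T s (j + k).
have Hlow : W (j + k) (\sum_(i < k) p`_i *: iter i T z).
  apply: sub_sum => // i; apply: sub_scale => //.
  apply: (W_mono (j := (j.+1 + i)%N)); first by rewrite addSn -addnS leq_add2l.
  exact: (iter_jump Hj Hz nz i).1.
have Hk : W (j + k) (p`_k *: iter k T z).
  have -> : p`_k *: iter k T z = (-1) *: (\sum_(i < k) p`_i *: iter i T z) +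
       (\sum_(i < k) p`_i *: iter i T z + p`_k *: iter k T z) by rewrite scaleN1r addKr.
  by apply: sW.2.
have pk : p`_k != 0 by rewrite -lead_coefE lead_coef_eq0.
apply: (iter_jump Hj Hz nz k).2.
by rewrite -(scalerK pk (iter k T z)); apply: sub_scale.
Qed.

End TS2.

Section TS3.
Variables (K : fieldType) (X : lmodType K) (T : {linear X -> X}) (s : seq X).
Local Notation W := (W T s).

Lemma deg_lem J a z : W a z -> ~ W J z ->
  exists j, (J <= j)%N /\ (j < a)%N /\ W j.+1 z /\ ~ W j z.
Proof.
elim: a => [|a IH] Ha nJ.
  by case: nJ; apply: (W_mono (j := 0%N)).
case: (classic (W a z)) => [Wa|nWa].
  have [j [H1 [H2 H3]]] := IH Wa nJ; exists j; split => //; split => //; exact: ltnW.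
exists a; split; last by [].
rewrite leqNgt; apply/negP => aJ; apply: nJ; exact: W_mono aJ Ha.
Qed.

Lemma iter0 i : iter i T 0 = 0.
Proof. by elim: i => [//|i IH] /=; rewrite IH linear0. Qed.

Lemma I0_lem J x :
  (forall M : X -> Prop, is_subspace M -> finite_dim M -> T_invariant (fun v : X => T v) M ->
     ~ nontrivial M) ->
  inspan s x -> x <> 0 -> exists i, (i <= size (w T s J))%N /\ ~ W J (iter i T x).
Proof.
move=> Hinv Hx x0; apply: NNPP => N.
have all : forall i, (i <= size (w T s J))%N -> W J (iter i T x).
  by move=> i Hi; apply: NNPP => Ni; apply: N; exists i.
pose f i := iter i T x.
have nf : ~ free (mkseq f (size (w T s J)).+1).
  move=> fu; suff : (size (mkseq f (size (w T s J)).+1) <= size (w T s J))%N.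
    by rewrite size_mkseq ltnn.
  apply: (steinitz fu) => i; rewrite size_mkseq => Hi.
  by rewrite nth_mkseq //; apply: all.
have f1 : free (mkseq f 1).
  rewrite (_ : mkseq f 1 = rcons [::] x) //; apply: free_rcons => //.
  by move/inspan_nil.
have [k [k0 [fk Hk]]] := chain f1 nf.
apply: (Hinv (inspan (mkseq f k))).
- exact: inspan_sub.
- by exists (mkseq f k) => y; exact: inspan_span_seq.
- move=> y [c ->]; rewrite -comb_map.
  apply: (inspan_incl (u := map T (mkseq f k))); last by eexists.
  move=> i; rewrite size_map size_mkseq => Hi.
  rewrite (nth_map 0) ?size_mkseq // nth_mkseq //.
  have -> : T (f i) = f i.+1 by [].
  case: (ltnP i.+1 k) => Hi2.
    by rewrite -(nth_mkseq 0 f Hi2); apply: inspan_nth; rewrite size_mkseq.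
  have -> : i.+1 = k by apply/eqP; rewrite eqn_leq Hi Hi2.
  exact: Hk.
- exists x; split => //.
  have -> : x = (mkseq f k)`_0 by rewrite nth_mkseq.
  by apply: inspan_nth; rewrite size_mkseq.
Qed.

End TS3.

Unset Implicit Arguments.

Theorem lemma1p5 (K : fieldType) (X : lmodType K) (T : {linear X -> X}) :
  (exists x : X, x <> 0) ->
  (forall M : X -> Prop, is_subspace M -> finite_dim M -> T_invariant (fun v : X => T v) M ->
     ~ nontrivial M) ->
  forall L : X -> Prop, is_subspace L -> finite_dim L ->
  exists m : nat, forall p : {poly K}, (m <= (size p).-1)%N -> p != 0 ->
    forall y : X, L y -> (exists x, L x /\ y = poly_app p (fun v : X => T v) x) -> y = 0.
Proof.
move=> _ Hinv L sL [s Hs].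
have Ls : forall x, L x <-> inspan s x.
  by move=> x; split; [move/Hs/inspan_span_seq | move/inspan_span_seq/Hs].
have [J jump] := exists_J T s.
exists (size (w T s J)) => p Hm p0 y Ly [x [Lx Hy]].
apply: NNPP => y0.
have x0 : x <> 0.
  move=> E; apply: y0; rewrite Hy E /poly_app big1 // => i _.
  by rewrite iter0 scaler0.
have [i [Hi ni]] := @I0_lem K X T s J x Hinv (proj1 (Ls x) Lx) x0.
have [j [Jj [ji [Wj nWj]]]] := @deg_lem K X T s J i (iter i T x) (@W_iter K X T s i x (proj1 (Ls x) Lx)) ni.
apply: (@poly_jump K X T s J jump p j (iter i T x) Jj Wj nWj p0).
rewrite -poly_iter -Hy.
apply: (@W_mono K X T s i); last exact: (@W_iter K X T s i y (proj1 (Ls y) Ly)).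
exact: leq_trans Hi (leq_trans Hm (leq_addl _ _)).
Qed.
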